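(* Let $l>0$ and $(a,M)\in\mathcal B_l$. Then $G_2$ is twice differentiable at $r_{\Delta,frac}$, and there is $b=b(a,M,l)>0$ such that for all $r\in(r_+,\bar r_+)$ $$\frac{2V_{axi}(r)\,G_2'(r)}{g_1(r)}\ \ge\ b\,\frac{r^2+a^2}{r\Delta(r)},$$ where $G_2'=\frac{dG_2}{dr^\star}$.
   Context: $\Delta(r)=(r^2+a^2)(1-\frac{r^2}{l^2})-2Mr$; $(a,M)\in\mathcal B_l$ means $\Delta$ has four distinct real roots $\bar r_-<0\le r_-<r_+<\bar r_+$. The tortoise coordinate $r^\star$ satisfies $\frac{dr^\star}{dr}=\frac{r^2+a^2}{\Delta}$. $g_1=\frac{r^2+a^2}{\sqrt\Delta}$, $V_{axi}=\frac{(r^2+a^2)^2}{\Delta}$. $r_{\Delta,frac}\in(r_+,\bar r_+)$ is the unique critical point (maximum) of $\frac{\Delta}{(r^2+a^2)^2}$ on $(r_+,\bar r_+)$. $G_2^2=V_{axi}-\min_{[r_+,\bar r_+]}V_{axi}$, and $G_2=\sqrt{G_2^2}$ for $r\ge r_{\Delta,frac}$, $G_2=-\sqrt{G_2^2}$ for $r\le r_{\Delta,frac}$. *)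

(* Defs.v *)
From Stdlib Require Import Reals.
From Coquelicot Require Import Coquelicot.
Open Scope R_scope.

Definition Delta_l (a M l r : R) : R :=
  (r ^ 2 + a ^ 2) * (1 - r ^ 2 / l ^ 2) - 2 * M * r.

Definition in_B (l a M rbm rm rp rbp : R) : Prop :=
  rbm < 0 /\ 0 <= rm /\ rm < rp /\ rp < rbp /\
  Delta_l a M l rbm = 0 /\ Delta_l a M l rm = 0 /\
  Delta_l a M l rp = 0 /\ Delta_l a M l rbp = 0.

Definition g1 (a M l r : R) : R := (r ^ 2 + a ^ 2) / sqrt (Delta_l a M l r).

Definition Vaxi (a M l r : R) : R := (r ^ 2 + a ^ 2) ^ 2 / Delta_l a M l r.

(* Delta/(r^2+a^2)^2, whose unique critical point on (r_+, rbar_+) is r_{Delta,frac} *)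
Definition Dfrac (a M l r : R) : R := Delta_l a M l r / (r ^ 2 + a ^ 2) ^ 2.

Definition G2 (a M l r0 Vmin r : R) : R :=
  if Rle_dec r0 r then sqrt (Vaxi a M l r - Vmin)
  else - sqrt (Vaxi a M l r - Vmin).

Definition dstar (a M l : R) (f : R -> R) (r : R) : R :=
  Delta_l a M l r / (r ^ 2 + a ^ 2) * Derive f r.

(* Main.v *)
Require Import Defs.
From Stdlib Require Import Reals Lra Psatz.
From Coquelicot Require Import Coquelicot.
Open Scope R_scope.

Definition kap (a l : R) := 1 + a^2/l^2.
Definition Pc a M l r := kap a l * r^3 - 3*M*r^2 + kap a l * a^2 * r + M*a^2.
Definition P2c a M l r0 r := kap a l*(r^2 + r*r0 + r0^2) - 3*M*(r+r0) + kap a l*a^2.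
Definition qc a M l r0 r := kap a l*(r0^2+a^2)*(r^2+2*r0*r+2*r0^2+a^2)
   - 2*M*r0*(r^2+2*r0*r+3*r0^2+2*a^2).
Definition qd a M l r0 r := kap a l*(r0^2+a^2)*(2*r+2*r0) - 2*M*r0*(2*r+2*r0).
Definition Dd a M l r := 2*r - 4*r^3/l^2 - 2*r*a^2/l^2 - 2*M.
Definition Hc a M l r0 r := qc a M l r0 r / (Delta_l a M l r * Delta_l a M l r0).
Definition Hd a M l r0 r := (qd a M l r0 r * Delta_l a M l r - qc a M l r0 r * Dd a M l r)
   / (Delta_l a M l r ^ 2 * Delta_l a M l r0).
Definition Kc a M l r0 r := (r - r0) * sqrt (Hc a M l r0 r).
Definition Kd a M l r0 r := (r^2+a^2) * P2c a M l r0 r / (Delta_l a M l r ^ 2 * sqrt (Hc a M l r0 r)).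

Lemma der_Delta a M l r : l <> 0 -> is_derive (Delta_l a M l) r (Dd a M l r).
Proof. intro hl. unfold Delta_l, Dd. auto_derive; auto. field. auto. Qed.

Lemma der_q a M l r0 r : is_derive (qc a M l r0) r (qd a M l r0 r).
Proof. unfold qc, qd. auto_derive; auto. ring. Qed.

Lemma der_Dfrac a M l r : l <> 0 -> 0 < r^2 + a^2 ->
  is_derive (Dfrac a M l) r (-2 * Pc a M l r / (r^2+a^2)^3).
Proof. intros hl hs. unfold Dfrac, Delta_l, Pc, kap. auto_derive.
  - nra.
  - field. split; auto. lra.
Qed.

Lemma der_H a M l r0 r : l <> 0 -> Delta_l a M l r <> 0 -> Delta_l a M l r0 <> 0 ->
  is_derive (Hc a M l r0) r (Hd a M l r0 r).
Proof. intros hl h1 h2.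
  assert (G : is_derive (fun t => Delta_l a M l t * Delta_l a M l r0) r (Dd a M l r * Delta_l a M l r0)).
  { unfold Delta_l, Dd. auto_derive; auto. field. auto. }
  assert (hne : Delta_l a M l r * Delta_l a M l r0 <> 0).
  { intro h. apply Rmult_integral in h. tauto. }
  pose proof (is_derive_div _ _ r _ _ (der_q a M l r0 r) G hne) as D.
  replace (Hd a M l r0 r) with ((qd a M l r0 r * (Delta_l a M l r * Delta_l a M l r0) -
       qc a M l r0 r * (Dd a M l r * Delta_l a M l r0)) / (Delta_l a M l r * Delta_l a M l r0) ^ 2).
  exact D.
  unfold Hd. field. auto.
Qed.

Lemma prod0 x y : x <> 0 -> x * y = 0 -> y = 0.
Proof. intros h1 h2. destruct (Rmult_integral _ _ h2); tauto. Qed.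

Lemma cubic4 c3 c2 c1 c0 x1 x2 x3 x4 : x1 < x2 -> x2 < x3 -> x3 < x4 ->
  c3*x1^3+c2*x1^2+c1*x1+c0 = 0 -> c3*x2^3+c2*x2^2+c1*x2+c0 = 0 ->
  c3*x3^3+c2*x3^2+c1*x3+c0 = 0 -> c3*x4^3+c2*x4^2+c1*x4+c0 = 0 ->
  c3 = 0 /\ c2 = 0 /\ c1 = 0 /\ c0 = 0.
Proof.
  intros h12 h23 h34 q1 q2 q3 q4.
  assert (E12 : c3*(x1^2+x1*x2+x2^2)+c2*(x1+x2)+c1 = 0).
  { apply (prod0 (x1-x2)). lra. transitivity ((c3*x1^3+c2*x1^2+c1*x1+c0) - (c3*x2^3+c2*x2^2+c1*x2+c0)). ring. lra. }
  assert (E13 : c3*(x1^2+x1*x3+x3^2)+c2*(x1+x3)+c1 = 0).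
  { apply (prod0 (x1-x3)). lra. transitivity ((c3*x1^3+c2*x1^2+c1*x1+c0) - (c3*x3^3+c2*x3^2+c1*x3+c0)). ring. lra. }
  assert (E14 : c3*(x1^2+x1*x4+x4^2)+c2*(x1+x4)+c1 = 0).
  { apply (prod0 (x1-x4)). lra. transitivity ((c3*x1^3+c2*x1^2+c1*x1+c0) - (c3*x4^3+c2*x4^2+c1*x4+c0)). ring. lra. }
  assert (F3 : c3*(x1+x2+x3)+c2 = 0).
  { apply (prod0 (x2-x3)). lra. transitivity ((c3*(x1^2+x1*x2+x2^2)+c2*(x1+x2)+c1) - (c3*(x1^2+x1*x3+x3^2)+c2*(x1+x3)+c1)). ring. lra. }
  assert (F4 : c3*(x1+x2+x4)+c2 = 0).
  { apply (prod0 (x2-x4)). lra. transitivity ((c3*(x1^2+x1*x2+x2^2)+c2*(x1+x2)+c1) - (c3*(x1^2+x1*x4+x4^2)+c2*(x1+x4)+c1)). ring. lra. }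
  assert (C3 : c3 = 0).
  { apply (prod0 (x3-x4)). lra. transitivity ((c3*(x1+x2+x3)+c2) - (c3*(x1+x2+x4)+c2)). ring. lra. }
  subst c3. assert (c2 = 0) by lra. subst c2. assert (c1 = 0) by lra. subst c1. lra.
Qed.

Definition e1 (x1 x2 x3 x4 : R) := x1+x2+x3+x4.
Definition e2 (x1 x2 x3 x4 : R) := x1*x2+x1*x3+x1*x4+x2*x3+x2*x4+x3*x4.
Definition e3 (x1 x2 x3 x4 : R) := x1*x2*x3+x1*x2*x4+x1*x3*x4+x2*x3*x4.
Definition e4 (x1 x2 x3 x4 : R) := x1*x2*x3*x4.

Lemma Dpoly a M l r : l <> 0 -> Delta_l a M l r * l^2 = - r^4 + (l^2-a^2)*r^2 - 2*M*l^2*r + a^2*l^2.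
Proof. intro; unfold Delta_l; field; auto. Qed.

Lemma Pipoly x1 x2 x3 x4 r : (r-x1)*(r-x2)*(r-x3)*(r-x4) =
  r^4 - e1 x1 x2 x3 x4 * r^3 + e2 x1 x2 x3 x4 * r^2 - e3 x1 x2 x3 x4 * r + e4 x1 x2 x3 x4.
Proof. unfold e1,e2,e3,e4; ring. Qed.

Lemma vieta l a M x1 x2 x3 x4 : 0 < l -> in_B l a M x1 x2 x3 x4 ->
  e1 x1 x2 x3 x4 = 0 /\ e2 x1 x2 x3 x4 = a^2 - l^2 /\ e3 x1 x2 x3 x4 = -2*M*l^2
  /\ e4 x1 x2 x3 x4 = -a^2*l^2.
Proof.
  intros hl (h1 & h2 & h3 & h4 & d1 & d2 & d3 & d4).
  assert (hl2 : l^2 <> 0) by (apply pow_nonzero; lra).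
  assert (key : forall x, Delta_l a M l x = 0 -> (x-x1)*(x-x2)*(x-x3)*(x-x4) = 0 ->
     (-(e1 x1 x2 x3 x4))*x^3 + (e2 x1 x2 x3 x4 + l^2 - a^2)*x^2 + (-(e3 x1 x2 x3 x4) - 2*M*l^2)*x
       + (e4 x1 x2 x3 x4 + a^2*l^2) = 0).
  { intros x dx px. rewrite Pipoly in px. pose proof (Dpoly a M l x ltac:(lra)) as E.
    rewrite dx in E. lra. }
  destruct (cubic4 _ _ _ _ x1 x2 x3 x4 ltac:(lra) ltac:(lra) ltac:(lra)
    (key x1 d1 ltac:(ring)) (key x2 d2 ltac:(ring)) (key x3 d3 ltac:(ring)) (key x4 d4 ltac:(ring)))
    as (c3 & c2 & c1 & c0).
  repeat split; lra.
Qed.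

Lemma Dfac l a M x1 x2 x3 x4 r : 0 < l -> in_B l a M x1 x2 x3 x4 ->
  Delta_l a M l r * l^2 = - ((r-x1)*(r-x2)*(r-x3)*(r-x4)).
Proof.
  intros hl hB. destruct (vieta l a M x1 x2 x3 x4 hl hB) as (v1&v2&v3&v4).
  rewrite Dpoly by lra. rewrite Pipoly, v1, v2, v3, v4. ring.
Qed.

Lemma kap_pos a l : 0 < l -> 0 < kap a l.
Proof. intro. unfold kap. assert (0 <= a^2/l^2). { apply Rdiv_le_0_compat; [nra| apply pow_lt; lra]. } lra. Qed.

Lemma idN a M l r : l <> 0 -> -2 * Pc a M l r = Dd a M l r * (r^2+a^2) - 4*r*Delta_l a M l r.
Proof. intro. unfold Pc, Dd, Delta_l, kap. field. auto. Qed.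

Lemma idP a M l r0 r : Pc a M l r = (r-r0) * P2c a M l r0 r + Pc a M l r0.
Proof. unfold Pc, P2c. ring. Qed.

Lemma idW a M l r0 r : l <> 0 ->
  (r^2+a^2)^2 * Delta_l a M l r0 - (r0^2+a^2)^2 * Delta_l a M l r
  = (r-r0)^2 * qc a M l r0 r + 2*(r-r0)*(r0^2+a^2)*Pc a M l r0.
Proof. intro. unfold qc, Pc, Delta_l, kap. field. auto. Qed.

Lemma idq0 a M l r0 : qc a M l r0 r0 = (r0^2+a^2) * P2c a M l r0 r0 + 2*r0*Pc a M l r0.
Proof. unfold qc, P2c, Pc. ring. Qed.

Lemma idK a M l r0 r : l <> 0 ->
  2*qc a M l r0 r*Delta_l a M l r + (r-r0)*(qd a M l r0 r*Delta_l a M l r - qc a M l r0 r*Dd a M l r)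
  - 2*(r^2+a^2)*P2c a M l r0 r*Delta_l a M l r0
  = Pc a M l r0 * (2*(((r^2+a^2)*(r0^2+a^2)/l^2)*(r+r0) - 2*M*(r*r0-a^2) + (r0^2+a^2)*Dd a M l r)).
Proof. intro. unfold qc, qd, P2c, Pc, Delta_l, Dd, kap. field. auto. Qed.


Lemma Dpos (l a M x1 x2 x3 x4 : R) (hl : 0 < l) (hB : in_B l a M x1 x2 x3 x4) r : x3 < r < x4 -> 0 < Delta_l a M l r.
Proof.
  intro hr. pose proof (Dfac l a M x1 x2 x3 x4 r hl hB) as E.
  destruct hB as (h1 & h2 & h3 & h4 & _).
  assert (p : 0 < (r-x1)*(r-x2)*(r-x3)) by (repeat apply Rmult_lt_0_compat; lra).
  assert (0 < Delta_l a M l r * l^2) by (rewrite E; nra).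
  assert (0 < l^2) by (apply pow_lt; lra).
  nra.
Qed.

Lemma Mpos (l a M x1 x2 x3 x4 : R) (hl : 0 < l) (hB : in_B l a M x1 x2 x3 x4) : 0 < M.
Proof.
  destruct (vieta l a M x1 x2 x3 x4 hl hB) as (v1&v2&v3&v4).
  destruct hB as (h1 & h2 & h3 & h4 & _).
  unfold e1 in v1. unfold e3 in v3.
  assert (x1 = -(x2+x3+x4)) by lra. subst x1.
  assert (0 < l^2) by (apply pow_lt; lra).
  assert (0 < x3*x3*x4) by (repeat apply Rmult_lt_0_compat; lra).
  assert (0 <= x2*x3*x4) by (repeat apply Rmult_le_pos; lra).
  assert (0 <= x2*x2*x3) by (repeat apply Rmult_le_pos; lra).
  assert (0 <= x2*x2*x4) by (repeat apply Rmult_le_pos; lra).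
  assert (0 <= x2*x4*x4) by (repeat apply Rmult_le_pos; lra).
  assert (0 <= x2*x3*x3) by (repeat apply Rmult_le_pos; lra).
  assert (0 < x3*x4*x4) by (repeat apply Rmult_lt_0_compat; lra).
  nra.
Qed.

Lemma Dd3 (l a M x1 x2 x3 x4 : R) (hl : 0 < l) (hB : in_B l a M x1 x2 x3 x4) : 0 < Dd a M l x3.
Proof.
  destruct (vieta l a M x1 x2 x3 x4 hl hB) as (v1&v2&v3&v4).
  destruct hB as (h1 & h2 & h3 & h4 & _).
  assert (E : Dd a M l x3 * l^2 = -((x3-x1)*(x3-x2)*(x3-x4))).
  { assert (I : (x3-x1)*(x3-x2)*(x3-x4) = 4*x3^3 - 3*e1 x1 x2 x3 x4*x3^2 + 2*e2 x1 x2 x3 x4*x3 - e3 x1 x2 x3 x4)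
      by (unfold e1,e2,e3; ring).
    rewrite I, v1, v2, v3. unfold Dd. field. lra. }
  assert (p : 0 < (x3-x1)*(x3-x2)) by (apply Rmult_lt_0_compat; lra).
  assert (0 < l^2) by (apply pow_lt; lra).
  nra.
Qed.


Lemma P0zero a M l r0 : 0 < l -> 0 < r0 -> Derive (Dfrac a M l) r0 = 0 -> Pc a M l r0 = 0.
Proof.
  intros hl hr0 hD.
  assert (hs : 0 < r0^2 + a^2) by nra.
  rewrite (is_derive_unique _ _ _ (der_Dfrac a M l r0 ltac:(lra) hs)) in hD.
  assert (0 < (r0^2+a^2)^3) by (apply pow_lt; lra).
  apply (prod0 (-2 / (r0^2+a^2)^3)).
  { apply Rmult_integral_contrapositive; split. lra. apply Rinv_neq_0_compat; lra. }
  rewrite <- hD. field. lra.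
Qed.

Lemma P2pos (l a M x1 x2 x3 x4 r0 : R) (hl : 0 < l) (hB : in_B l a M x1 x2 x3 x4) :
  x3 < r0 < x4 -> Pc a M l r0 = 0 -> forall c, x3 <= c -> 0 < P2c a M l r0 c.
Proof.
  intros hr0 hP c hc.
  pose proof (Dd3 l a M x1 x2 x3 x4 hl hB) as hDd.
  pose proof (Mpos l a M x1 x2 x3 x4 hl hB) as hM.
  pose proof (kap_pos a l hl) as hk.
  destruct hB as (h1 & h2 & h3 & h4 & d1 & d2 & d3 & d4).
  assert (Px3 : Pc a M l x3 < 0).
  { pose proof (idN a M l x3 ltac:(lra)) as E. rewrite d3 in E.
    assert (0 < Dd a M l x3 * (x3^2+a^2)) by (apply Rmult_lt_0_compat; nra). lra. }
  assert (P23 : 0 < P2c a M l r0 x3).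
  { pose proof (idP a M l r0 x3) as E. rewrite hP in E. nra. }
  assert (P20 : P2c a M l r0 0 <= 0).
  { pose proof (idP a M l r0 0) as E. rewrite hP in E.
    assert (Pc a M l 0 = M*a^2) by (unfold Pc; ring). nra. }
  assert (I1 : P2c a M l r0 c - P2c a M l r0 x3 = (c-x3)*(kap a l*(c+x3+r0) - 3*M)) by (unfold P2c; ring).
  assert (I2 : P2c a M l r0 x3 - P2c a M l r0 0 = x3*(kap a l*(x3+r0) - 3*M)) by (unfold P2c; ring).
  assert (0 < kap a l*(x3+r0) - 3*M) by nra.
  assert (0 < kap a l*(c+x3+r0) - 3*M) by nra.
  nra.
Qed.

Lemma P2mono (l a M x1 x2 x3 x4 r0 : R) (hl : 0 < l) (hB : in_B l a M x1 x2 x3 x4) :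
  x3 < r0 < x4 -> Pc a M l r0 = 0 -> forall c, x3 <= c -> P2c a M l r0 x3 <= P2c a M l r0 c.
Proof.
  intros hr0 hP c hc.
  pose proof (P2pos l a M x1 x2 x3 x4 r0 hl hB hr0 hP x3 (Rle_refl _)) as P23.
  pose proof (Mpos l a M x1 x2 x3 x4 hl hB) as hM.
  pose proof (kap_pos a l hl) as hk.
  destruct hB as (h1 & h2 & h3 & h4 & d1 & d2 & d3 & d4).
  assert (P20 : P2c a M l r0 0 <= 0).
  { pose proof (idP a M l r0 0) as E. rewrite hP in E.
    assert (Pc a M l 0 = M*a^2) by (unfold Pc; ring). nra. }
  assert (I1 : P2c a M l r0 c - P2c a M l r0 x3 = (c-x3)*(kap a l*(c+x3+r0) - 3*M)) by (unfold P2c; ring).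
  assert (I2 : P2c a M l r0 x3 - P2c a M l r0 0 = x3*(kap a l*(x3+r0) - 3*M)) by (unfold P2c; ring).
  assert (0 < kap a l*(x3+r0) - 3*M) by nra.
  assert (0 < kap a l*(c+x3+r0) - 3*M) by nra.
  nra.
Qed.

Lemma fmax (l a M x1 x2 x3 x4 r0 : R) (hl : 0 < l) (hB : in_B l a M x1 x2 x3 x4) :
  x3 < r0 < x4 -> Pc a M l r0 = 0 -> forall r, x3 < r < x4 -> r <> r0 ->
  Dfrac a M l r < Dfrac a M l r0.
Proof.
  intros hr0 hP r hr hne.
  pose proof hB as hB'. destruct hB' as (h1 & h2 & h3 & h4 & _).
  set (f' := fun c => -2 * Pc a M l c / (c^2+a^2)^3).
  assert (hd : forall c, x3 <= c <= x4 -> derivable_pt_lim (Dfrac a M l) c (f' c)).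
  { intros c hc. apply is_derive_Reals. apply der_Dfrac. lra. nra. }
  assert (sgn : forall c, x3 < c -> c <> r0 -> f' c * (c - r0) < 0).
  { intros c hc e.
    pose proof (P2pos l a M x1 x2 x3 x4 r0 hl hB hr0 hP c ltac:(lra)) as p2.
    unfold f'. rewrite (idP a M l r0 c), hP.
    assert (0 < (c^2+a^2)^3) by (apply pow_lt; nra).
    assert (0 < (c-r0)^2) by (rewrite <- Rsqr_pow2; apply Rsqr_pos_lt; lra).
    replace (-2 * ((c - r0) * P2c a M l r0 c + 0) / (c ^ 2 + a ^ 2) ^ 3 * (c - r0))
      with (-(2 * ((c-r0)^2 * P2c a M l r0 c) / (c ^ 2 + a ^ 2) ^ 3)) by (field; nra).
    assert (0 < 2 * ((c-r0)^2 * P2c a M l r0 c) / (c ^ 2 + a ^ 2) ^ 3).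
    { apply Rdiv_lt_0_compat; [|lra]. apply Rmult_lt_0_compat; [lra|]. apply Rmult_lt_0_compat; lra. }
    lra. }
  destruct (Rlt_or_le r r0) as [lt|le].
  - destruct (MVT_cor2 (Dfrac a M l) f' r r0 lt ltac:(intros c hc; apply hd; lra)) as (c & E & hc).
    pose proof (sgn c ltac:(lra) ltac:(lra)). nra.
  - assert (lt : r0 < r) by lra.
    destruct (MVT_cor2 (Dfrac a M l) f' r0 r lt ltac:(intros c hc; apply hd; lra)) as (c & E & hc).
    pose proof (sgn c ltac:(lra) ltac:(lra)). nra.
Qed.

Lemma qpos (l a M x1 x2 x3 x4 r0 : R) (hl : 0 < l) (hB : in_B l a M x1 x2 x3 x4) :
  x3 < r0 < x4 -> Pc a M l r0 = 0 -> forall r, x3 < r < x4 -> 0 < qc a M l r0 r.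
Proof.
  intros hr0 hP r hr.
  pose proof hB as hB'. destruct hB' as (h1 & h2 & h3 & h4 & _).
  destruct (Req_dec r r0) as [e|e].
  - subst r. rewrite idq0, hP.
    pose proof (P2pos l a M x1 x2 x3 x4 r0 hl hB hr0 hP r0 ltac:(lra)). assert (0 < r0^2+a^2) by nra. nra.
  - pose proof (fmax l a M x1 x2 x3 x4 r0 hl hB hr0 hP r hr e) as hf.
    pose proof (idW a M l r0 r ltac:(lra)) as W. rewrite hP in W.
    unfold Dfrac in hf.
    assert (hs : 0 < r^2+a^2) by nra. assert (hs0 : 0 < r0^2+a^2) by nra.
    assert (E : (r ^ 2 + a ^ 2) ^ 2 * Delta_l a M l r0 - (r0 ^ 2 + a ^ 2) ^ 2 * Delta_l a M l r
      = ((r ^ 2 + a ^ 2) ^ 2 * (r0 ^ 2 + a ^ 2) ^ 2) * (Delta_l a M l r0 / (r0 ^ 2 + a ^ 2) ^ 2 - Delta_l a M l r / (r ^ 2 + a ^ 2) ^ 2))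
      by (field; lra).
    assert (0 < (r ^ 2 + a ^ 2) ^ 2 * (r0 ^ 2 + a ^ 2) ^ 2) by (apply Rmult_lt_0_compat; apply pow_lt; lra).
    assert (0 < (r-r0)^2) by (rewrite <- Rsqr_pow2; apply Rsqr_pos_lt; lra).
    assert (0 < (r-r0)^2 * qc a M l r0 r) by nra.
    nra.
Qed.

Lemma Vdiff a M l r0 r : l <> 0 -> Delta_l a M l r <> 0 -> Delta_l a M l r0 <> 0 -> Pc a M l r0 = 0 ->
  Vaxi a M l r - Vaxi a M l r0 = (r - r0)^2 * Hc a M l r0 r.
Proof.
  intros hl h1 h2 hP. unfold Vaxi, Hc.
  pose proof (idW a M l r0 r hl) as W. rewrite hP in W.
  apply (Rmult_eq_reg_r (Delta_l a M l r * Delta_l a M l r0)).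
  2: { intro h. apply Rmult_integral in h. tauto. }
  transitivity ((r ^ 2 + a ^ 2) ^ 2 * Delta_l a M l r0 - (r0 ^ 2 + a ^ 2) ^ 2 * Delta_l a M l r).
  field. auto. rewrite W. field. auto.
Qed.

Lemma G2eq (l a M x1 x2 x3 x4 r0 Vmin : R) (hl : 0 < l) (hB : in_B l a M x1 x2 x3 x4) :
  x3 < r0 < x4 -> Pc a M l r0 = 0 -> Vmin = Vaxi a M l r0 -> forall r, x3 < r < x4 ->
  G2 a M l r0 Vmin r = Kc a M l r0 r.
Proof.
  intros hr0 hP hV r hr.
  pose proof (Dpos l a M x1 x2 x3 x4 hl hB r hr) as d.
  pose proof (Dpos l a M x1 x2 x3 x4 hl hB r0 hr0) as d0.
  pose proof (qpos l a M x1 x2 x3 x4 r0 hl hB hr0 hP r hr) as hq.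
  assert (hH : 0 < Hc a M l r0 r) by (unfold Hc; apply Rdiv_lt_0_compat; nra).
  unfold G2, Kc. rewrite hV, Vdiff by lra.
  rewrite sqrt_mult_alt by (apply pow2_ge_0).
  destruct (Rle_dec r0 r) as [le|lt].
  - rewrite sqrt_pow2 by lra. reflexivity.
  - replace ((r - r0)^2) with ((r0 - r)^2) by ring. rewrite sqrt_pow2 by lra. ring.
Qed.

Lemma Kder (l a M x1 x2 x3 x4 r0 : R) (hl : 0 < l) (hB : in_B l a M x1 x2 x3 x4) :
  x3 < r0 < x4 -> Pc a M l r0 = 0 -> forall r, x3 < r < x4 ->
  is_derive (Kc a M l r0) r (Kd a M l r0 r).
Proof.
  intros hr0 hP r hr.
  pose proof (Dpos l a M x1 x2 x3 x4 hl hB r hr) as d.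
  pose proof (Dpos l a M x1 x2 x3 x4 hl hB r0 hr0) as d0.
  pose proof (qpos l a M x1 x2 x3 x4 r0 hl hB hr0 hP r hr) as hq.
  assert (hH : 0 < Hc a M l r0 r) by (unfold Hc; apply Rdiv_lt_0_compat; nra).
  assert (D1 : is_derive (fun t => t - r0) r 1) by (auto_derive; auto; ring).
  assert (D2 := is_derive_sqrt _ _ _ (der_H a M l r0 r ltac:(lra) ltac:(lra) ltac:(lra)) hH).
  pose proof (is_derive_mult _ _ r _ _ D1 D2 Rmult_comm) as D.
  set (S := sqrt (Hc a M l r0 r)) in *.
  assert (hS : 0 < S) by (apply sqrt_lt_R0; auto).
  assert (hSS : S * S = Hc a M l r0 r) by (apply sqrt_sqrt; lra).
  replace (Kd a M l r0 r) with (plus (mult 1 S) (mult (r - r0) (Hd a M l r0 r / (2 * S)))).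
  exact D.
  unfold plus, mult; simpl.
  pose proof (idK a M l r0 r ltac:(lra)) as K. rewrite hP, Rmult_0_l in K.
  unfold Kd. fold S.
  transitivity ((2 * (S*S) + (r-r0) * Hd a M l r0 r) / (2*S)). field. lra.
  rewrite hSS. unfold Hc, Hd.
  set (q := qc a M l r0 r) in *. set (qd' := qd a M l r0 r) in *. set (DD := Delta_l a M l r) in *.
  set (D0 := Delta_l a M l r0) in *. set (dd := Dd a M l r) in *.
  transitivity ((2 * q * DD + (r - r0) * (qd' * DD - q * dd)) / (2 * DD^2 * D0 * S)).
  field. repeat split; lra.
  replace (2 * q * DD + (r - r0) * (qd' * DD - q * dd)) with (2 * (r ^ 2 + a ^ 2) * P2c a M l r0 r * D0) by lra.
  field. repeat split; lra.
Qed.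

Lemma loc_int x3 x4 r : x3 < r < x4 -> locally r (fun t => x3 < t < x4).
Proof. intro h. apply (locally_interval _ r (Finite x3) (Finite x4)); simpl; intros; lra. Qed.

Lemma Kd_ex (l a M x1 x2 x3 x4 r0 : R) (hl : 0 < l) (hB : in_B l a M x1 x2 x3 x4) :
  x3 < r0 < x4 -> Pc a M l r0 = 0 -> forall r, x3 < r < x4 -> ex_derive (Kd a M l r0) r.
Proof.
  intros hr0 hP r hr.
  pose proof (Dpos l a M x1 x2 x3 x4 hl hB r hr) as d.
  pose proof (Dpos l a M x1 x2 x3 x4 hl hB r0 hr0) as d0.
  pose proof (qpos l a M x1 x2 x3 x4 r0 hl hB hr0 hP r hr) as hq.
  assert (hH : 0 < Hc a M l r0 r) by (unfold Hc; apply Rdiv_lt_0_compat; nra).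
  unfold Kd. apply ex_derive_div.
  - unfold P2c. auto_derive. auto.
  - apply ex_derive_mult. apply ex_derive_pow. eexists. apply der_Delta; lra.
    eexists. apply is_derive_sqrt. apply der_H; lra. auto.
  - assert (0 < sqrt (Hc a M l r0 r)) by (apply sqrt_lt_R0; auto).
    assert (0 < Delta_l a M l r ^ 2) by (apply pow_lt; auto). nra.
Qed.

Theorem mainTheorem10 :
  forall (l a M rbm rm rp rbp r0 Vmin : R),
    0 < l ->
    in_B l a M rbm rm rp rbp ->
    rp < r0 < rbp ->
    Derive (Dfrac a M l) r0 = 0 ->
    (exists r1, rp < r1 < rbp /\ Vaxi a M l r1 = Vmin) ->
    (forall r, rp < r < rbp -> Vmin <= Vaxi a M l r) ->
    ((exists eps : posreal, forall r, Rabs (r - r0) < eps ->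
         ex_derive (G2 a M l r0 Vmin) r) /\
     ex_derive (Derive (G2 a M l r0 Vmin)) r0) /\
    (forall r, rp < r < rbp -> ex_derive (G2 a M l r0 Vmin) r) /\
    exists b : R, 0 < b /\
      forall r, rp < r < rbp ->
        (2 * Vaxi a M l r * dstar a M l (G2 a M l r0 Vmin) r / g1 a M l r
        >= b * ((r ^ 2 + a ^ 2) / (r * Delta_l a M l r)))%R.
Proof.
  intros l a M x1 x2 x3 x4 r0 Vmin hl hB hr0 hDf [r1 [hr1 hV1]] hVmin.
  pose proof hB as hB'. destruct hB' as (h1 & h2 & h3 & h4 & _).
  assert (hP : Pc a M l r0 = 0) by (apply (P0zero a M l r0); auto; lra).
  pose proof (Dpos l a M x1 x2 x3 x4 hl hB r0 hr0) as d0.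
  assert (hV : Vmin = Vaxi a M l r0).
  { apply Rle_antisym. apply hVmin; auto.
    rewrite <- hV1.
    pose proof (Dpos l a M x1 x2 x3 x4 hl hB r1 hr1) as d1.
    pose proof (qpos l a M x1 x2 x3 x4 r0 hl hB hr0 hP r1 hr1) as hq.
    pose proof (Vdiff a M l r0 r1 ltac:(lra) ltac:(lra) ltac:(lra) hP) as E.
    assert (0 <= Hc a M l r0 r1) by (unfold Hc; apply Rlt_le, Rdiv_lt_0_compat; nra).
    assert (0 <= (r1-r0)^2) by apply pow2_ge_0. nra. }
  assert (Gloc : forall r, x3 < r < x4 -> locally r (fun t => Kc a M l r0 t = G2 a M l r0 Vmin t)).
  { intros r hr. eapply filter_imp. 2: apply (loc_int x3 x4 r hr).
    intros t ht. symmetry. apply (G2eq l a M x1 x2 x3 x4 r0 Vmin hl hB hr0 hP hV t ht). }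
  assert (Gder : forall r, x3 < r < x4 -> is_derive (G2 a M l r0 Vmin) r (Kd a M l r0 r)).
  { intros r hr. apply (is_derive_ext_loc _ _ _ _ (Gloc r hr)).
    apply (Kder l a M x1 x2 x3 x4 r0 hl hB hr0 hP r hr). }
  assert (GD : forall r, x3 < r < x4 -> Derive (G2 a M l r0 Vmin) r = Kd a M l r0 r).
  { intros r hr. apply is_derive_unique. auto. }
  split; [split|split].
  - assert (he : 0 < Rmin (r0 - x3) (x4 - r0)) by (apply Rmin_glb_lt; lra).
    exists (mkposreal _ he). intros r hr. simpl in hr.
    assert (Rmin (r0 - x3) (x4 - r0) <= r0 - x3) by apply Rmin_l.
    assert (Rmin (r0 - x3) (x4 - r0) <= x4 - r0) by apply Rmin_r.
    apply Rabs_def2 in hr.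
    eexists. apply Gder. lra.
  - apply (ex_derive_ext_loc (Kd a M l r0)).
    { eapply filter_imp. 2: apply (loc_int x3 x4 r0 hr0). intros t ht. symmetry. auto. }
    apply (Kd_ex l a M x1 x2 x3 x4 r0 hl hB hr0 hP r0 hr0).
  - intros r hr. eexists. apply Gder. auto.
  - pose proof (Mpos l a M x1 x2 x3 x4 hl hB) as hM.
    pose proof (kap_pos a l hl) as hk.
    pose proof (P2pos l a M x1 x2 x3 x4 r0 hl hB hr0 hP x3 (Rle_refl _)) as p3.
    set (Qm := kap a l * (r0^2+a^2) * (x4^2 + 2*r0*x4 + 2*r0^2 + a^2)).
    assert (hQm : 0 < Qm) by (unfold Qm; apply Rmult_lt_0_compat; [apply Rmult_lt_0_compat|]; nra).
    set (A1 := 4 * x3^2 * P2c a M l r0 x3 ^2 * Delta_l a M l r0).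
    assert (hA1 : 0 < A1) by (unfold A1; repeat apply Rmult_lt_0_compat; try lra; apply pow_lt; lra).
    exists (sqrt (A1 / Qm)). split. apply sqrt_lt_R0, Rdiv_lt_0_compat; auto.
    intros r hr.
    pose proof (Dpos l a M x1 x2 x3 x4 hl hB r hr) as d.
    pose proof (qpos l a M x1 x2 x3 x4 r0 hl hB hr0 hP r hr) as hq.
    pose proof (P2mono l a M x1 x2 x3 x4 r0 hl hB hr0 hP r ltac:(lra)) as pm.
    assert (hH : 0 < Hc a M l r0 r) by (unfold Hc; apply Rdiv_lt_0_compat; nra).
    unfold dstar. rewrite GD by auto.
    set (S := sqrt (Hc a M l r0 r)).
    assert (hS : 0 < S) by (apply sqrt_lt_R0; auto).
    assert (hSS : S * S = Hc a M l r0 r) by (apply sqrt_sqrt; lra).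
    set (sD := sqrt (Delta_l a M l r)).
    assert (hsD : 0 < sD) by (apply sqrt_lt_R0; auto).
    assert (hsDD : sD * sD = Delta_l a M l r) by (apply sqrt_sqrt; lra).
    set (T := 2 * r * P2c a M l r0 r * sD / (Delta_l a M l r * S)).
    assert (hs : 0 < r^2+a^2) by nra.
    assert (EL : 2 * Vaxi a M l r * (Delta_l a M l r / (r ^ 2 + a ^ 2) * Kd a M l r0 r) / g1 a M l r
       = ((r ^ 2 + a ^ 2) / (r * Delta_l a M l r)) * T).
    { unfold Vaxi, Kd, g1, T. fold S. fold sD. field. repeat split; lra. }
    rewrite EL.
    assert (hT : 0 < T).
    { unfold T. apply Rdiv_lt_0_compat; [|nra].
      repeat apply Rmult_lt_0_compat; lra. }
    assert (TT : T * T = 4 * r^2 * P2c a M l r0 r ^ 2 * Delta_l a M l r0 / qc a M l r0 r).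
    { unfold T. transitivity (4 * r^2 * P2c a M l r0 r ^ 2 * (sD * sD) / (Delta_l a M l r ^ 2 * (S*S))).
      field. lra. rewrite hSS, hsDD. unfold Hc. field. repeat split; lra. }
    assert (hqm : qc a M l r0 r <= Qm).
    { unfold qc, Qm.
      assert (0 <= 2*M*r0*(r^2+2*r0*r+3*r0^2+2*a^2)) by (repeat apply Rmult_le_pos; nra).
      assert (r^2+2*r0*r+2*r0^2+a^2 <= x4^2 + 2*r0*x4 + 2*r0^2 + a^2) by nra.
      assert (0 < kap a l * (r0^2+a^2)) by (apply Rmult_lt_0_compat; nra).
      nra. }
    assert (hA2 : A1 <= 4 * r^2 * P2c a M l r0 r ^ 2 * Delta_l a M l r0).
    { unfold A1. apply Rmult_le_compat_r. lra.
      assert (x3^2 * P2c a M l r0 x3 ^2 <= r^2 * P2c a M l r0 r ^ 2).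
      { rewrite <- !Rpow_mult_distr. apply pow_incr. split. nra.
        apply Rmult_le_compat; lra. }
      lra. }
    assert (hB2 : A1 / Qm <= T * T).
    { rewrite TT. unfold Rdiv. apply Rle_trans with (4 * r^2 * P2c a M l r0 r ^ 2 * Delta_l a M l r0 * / Qm).
      apply Rmult_le_compat_r. apply Rlt_le, Rinv_0_lt_compat; auto. auto.
      apply Rmult_le_compat_l. lra. apply Rinv_le_contravar; auto. }
    assert (hb : sqrt (A1 / Qm) <= T).
    { rewrite <- (sqrt_square T) by lra. apply sqrt_le_1_alt. auto. }
    apply Rle_ge. rewrite Rmult_comm. apply Rmult_le_compat_l; auto.
    apply Rlt_le, Rdiv_lt_0_compat; nra.
Qed.
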